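(* There exists a continuous non-negative function $f$ on $[0,1)$ with $f(0)=0$ such that the following holds for every $n$. Let $0\le \mathcal{K}<1$ and let $\gamma:[a,b]\to\mathbb{H}^n$ be a unit speed path whose geodesic curvature satisfies $\kappa_\gamma(t)\le\mathcal{K}$ for all $t\in[a,b]$. Then $\gamma$ is a $\frac{1}{\sqrt{1-\mathcal{K}^2}}$-quasi-geodesic, and if $g_\gamma$ is the geodesic segment joining $\gamma(a)$ and $\gamma(b)$, then the Hausdorff distance between the image of $\gamma$ and the image of $g_\gamma$ is at most $f(\mathcal{K})$.
   Context: For a unit speed path $\gamma$ in a Riemannian manifold, the geodesic curvature is $\kappa_\gamma(t)=\big\|\frac{D\dot\gamma}{dt}(t)\big\|$, where $\frac{D}{dt}$ is the covariant derivative along $\gamma$. A map $\gamma:I\to X$ from an interval to a metric space is a $k$-quasi-geodesic if $\frac1k|s-t|\le d(\gamma(s),\gamma(t))\le k|s-t|$ for all $s,t\in I$. *)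

(* Defs.v *)
From Stdlib Require Import Reals Lra.
From Coquelicot Require Import Coquelicot.
Open Scope R_scope.

(* Points of R^{n+1} are functions nat -> R; only coordinates 0..n matter. *)
Definition point := nat -> R.

Fixpoint space_part (n : nat) (x y : point) : R :=
  match n with
  | O => 0
  | S m => space_part m x y + x (S m) * y (S m)
  end.

Definition mink (n : nat) (x y : point) : R := - x 0%nat * y 0%nat + space_part n x y.

Definition inH (n : nat) (x : point) : Prop := mink n x x = -1 /\ 0 < x 0%nat.

Definition acosh (z : R) : R := ln (z + sqrt (z * z - 1)).

Definition hdist (n : nat) (x y : point) : R := acosh (- mink n x y).

(* unit-speed parametrisation of the geodesic from x to y, s in [0, d(x,y)] *)
Definition geod_pt (n : nat) (x y : point) (s : R) : point :=
  fun i => cosh s * x i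
           + sinh s * ((y i - cosh (hdist n x y) * x i) / sinh (hdist n x y)).

Definition geodesic_segment_image (n : nat) (x y : point) (p : point) : Prop :=
  exists s, 0 <= s <= hdist n x y /\ p = geod_pt n x y s.

Definition path_image (gamma : R -> point) (a b : R) (p : point) : Prop :=
  exists t, a <= t <= b /\ p = gamma t.

(* covariant derivative of gamma' along gamma (Levi-Civita connection of the
   hyperboloid = tangential projection of the ambient derivative gamma''):
   v + <v,gamma> gamma is the orthogonal projection of v onto T_gamma H^n *)
Definition cov_accel (n : nat) (gamma gamma2 : R -> point) (t : R) : point :=
  fun i => gamma2 t i + mink n (gamma2 t) (gamma t) * gamma t i.

Definition geod_curvature (n : nat) (gamma gamma2 : R -> point) (t : R) : R :=
  sqrt (mink n (cov_accel n gamma gamma2 t) (cov_accel n gamma gamma2 t)).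

Definition quasi_geodesic (n : nat) (k : R) (gamma : R -> point) (a b : R) : Prop :=
  forall s t, a <= s <= b -> a <= t <= b ->
    / k * Rabs (s - t) <= hdist n (gamma s) (gamma t) <= k * Rabs (s - t).

Definition hausdorff_dist_le (n : nat) (A B : point -> Prop) (c : R) : Prop :=
  (forall p, A p -> forall eps, 0 < eps -> exists q, B q /\ hdist n p q < c + eps) /\
  (forall q, B q -> forall eps, 0 < eps -> exists p, A p /\ hdist n q p < c + eps).

(* Main.v *)
Require Import Defs.
From Stdlib Require Import Reals Lra Psatz FunctionalExtensionality Classical.
From Coquelicot Require Import Coquelicot.
Open Scope R_scope.

Module PA.

Lemma sp_sym n x y : space_part n x y = space_part n y x.
Proof. induction n; simpl; [lra|rewrite IHn; ring]. Qed.
Lemma mink_sym n x y : mink n x y = mink n y x.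
Proof. unfold mink; rewrite sp_sym; ring. Qed.
Lemma sp_add n u v w : space_part n (fun i => u i + v i) w = space_part n u w + space_part n v w.
Proof. induction n; simpl; [lra|rewrite IHn; ring]. Qed.
Lemma sp_scal n a u w : space_part n (fun i => a * u i) w = a * space_part n u w.
Proof. induction n; simpl; [lra|rewrite IHn; ring]. Qed.
Lemma mink_add n u v w : mink n (fun i => u i + v i) w = mink n u w + mink n v w.
Proof. unfold mink; rewrite sp_add; ring. Qed.
Lemma mink_scal n a u w : mink n (fun i => a * u i) w = a * mink n u w.
Proof. unfold mink; rewrite sp_scal; ring. Qed.
Lemma mink_addr n u v w : mink n w (fun i => u i + v i) = mink n w u + mink n w v.
Proof. rewrite !(mink_sym n w); apply mink_add. Qed.
Lemma mink_scalr n a u w : mink n w (fun i => a * u i) = a * mink n w u.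
Proof. rewrite !(mink_sym n w); apply mink_scal. Qed.
Lemma sp_ext n x x' y y' : (forall i, (i<=n)%nat -> x i = x' i) -> (forall i, (i<=n)%nat -> y i = y' i) ->
  space_part n x y = space_part n x' y'.
Proof. induction n; intros Hx Hy; simpl; auto. rewrite IHn; auto. rewrite Hx, Hy; auto. Qed.
Lemma mink_ext n x x' y y' : (forall i, (i<=n)%nat -> x i = x' i) -> (forall i, (i<=n)%nat -> y i = y' i) ->
  mink n x y = mink n x' y'.
Proof. intros Hx Hy; unfold mink; rewrite (sp_ext n x x' y y'), Hx, Hy; auto with arith. Qed.
Lemma sp_nonneg n x : 0 <= space_part n x x.
Proof. induction n; simpl; nra. Qed.

Lemma discr A B C : 0 <= C -> (forall l, 0 <= A - 2*B*l + C*l*l) -> B*B <= A*C.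
Proof.
  intros HC H.
  destruct (Req_dec C 0) as [E|E].
  - subst. destruct (Req_dec B 0) as [EB|EB]. subst; nra.
    pose proof (H ((A+1)/(2*B))).
    replace (A - 2 * B * ((A + 1) / (2 * B)) + 0 * ((A + 1) / (2 * B)) * ((A + 1) / (2 * B))) with (-1) in H0 by (field; auto). lra.
  - pose proof (H (B/C)). assert (0 < C) by lra.
    replace (A - 2*B*(B/C) + C*(B/C)*(B/C)) with ((A*C - B*B)/C) in H0 by (field; auto).
    apply Rmult_le_compat_r with (r:=C) in H0; [|lra].
    unfold Rdiv in H0. rewrite Rmult_assoc, Rinv_l in H0; lra.
Qed.

Lemma sp_quad n x y l : space_part n (fun i => x i + l * y i) (fun i => x i + l * y i)
  = space_part n x x + 2*l*space_part n x y + l*l*space_part n y y.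
Proof. induction n; simpl; [ring|rewrite IHn; ring]. Qed.
Lemma mink_quad n x y l : mink n (fun i => x i + l * y i) (fun i => x i + l * y i)
  = mink n x x + 2*l*mink n x y + l*l*mink n y y.
Proof. unfold mink; rewrite sp_quad; ring. Qed.

Lemma sp_cs n x y : space_part n x y * space_part n x y <= space_part n x x * space_part n y y.
Proof.
  apply discr. apply sp_nonneg. intros l.
  pose proof (sp_nonneg n (fun i => x i + (-l) * y i)). rewrite sp_quad in H. nra.
Qed.

Lemma perp_nonneg n g X : mink n g g = -1 -> mink n X g = 0 -> 0 <= mink n X X.
Proof.
  unfold mink; intros H1 H2.
  pose proof (sp_cs n X g). pose proof (sp_nonneg n X). pose proof (sp_nonneg n g).
  assert (E1: X 0%nat * g 0%nat = space_part n X g) by lra.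
  assert (E2: g 0%nat * g 0%nat = 1 + space_part n g g) by lra.
  assert (Hq: (X 0%nat * g 0%nat)*(X 0%nat * g 0%nat) <= space_part n X X * space_part n g g) by (rewrite E1; exact H).
  assert (X 0%nat * X 0%nat * (1 + space_part n g g) <= space_part n X X * (1 + space_part n g g)) by nra.
  assert (X 0%nat * X 0%nat <= space_part n X X).
  { apply Rmult_le_reg_r with (1 + space_part n g g); lra. }
  lra.
Qed.

Lemma mink_cs_perp n g X Y : mink n g g = -1 -> mink n X g = 0 -> mink n Y g = 0 ->
  mink n X Y * mink n X Y <= mink n X X * mink n Y Y.
Proof.
  intros H1 H2 H3. apply discr. apply (perp_nonneg n g); auto. intros l.
  pose proof (perp_nonneg n g (fun i => X i + (-l) * Y i) H1).
  rewrite mink_quad in H. 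
  assert (mink n (fun i : nat => X i + - l * Y i) g = 0) by (rewrite mink_add, mink_scal, H2, H3; ring).
  specialize (H H0). nra.
Qed.

Lemma inH_ge1 n p q : inH n p -> inH n q -> 1 <= - mink n p q.
Proof.
  intros [Hp Hp0] [Hq Hq0].
  set (al := - mink n p q).
  assert (Hw : 0 <= mink n (fun i => q i + (-al) * p i) (fun i => q i + (-al) * p i)).
  { apply (perp_nonneg n p); auto. rewrite mink_add, mink_scal, Hp. unfold al. rewrite (mink_sym n q p). ring. }
  rewrite mink_quad, Hp, Hq, (mink_sym n q p) in Hw. fold al in Hw. replace (mink n p q) with (-al) in Hw by (unfold al; ring).
  assert (1 <= al * al) by nra.
  assert (0 < al).
  { unfold al, mink in *. pose proof (sp_cs n p q) as HCS. pose proof (sp_nonneg n p). pose proof (sp_nonneg n q).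
    assert (space_part n p q < p 0%nat * q 0%nat).
    { destruct (Rle_lt_dec (space_part n p q) 0). nra.
      assert (E1: space_part n p p = p 0%nat * p 0%nat - 1) by lra.
      assert (E2: space_part n q q = q 0%nat * q 0%nat - 1) by lra.
      rewrite E1, E2 in HCS.
      assert (space_part n p q * space_part n p q < (p 0%nat * q 0%nat) * (p 0%nat * q 0%nat)) by nra.
      assert (0 < p 0%nat * q 0%nat) by nra.
      nra. }
    lra. }
  nra.
Qed.

End PA.
Import PA.

Module PB.

Lemma der_plus f g x df dg : is_derive f x df -> is_derive g x dg -> is_derive (fun s => f s + g s) x (df + dg).
Proof. rewrite !is_derive_Reals. intros. apply (derivable_pt_lim_plus f g); auto. Qed.
Lemma der_mult f g x df dg : is_derive f x df -> is_derive g x dg ->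
  is_derive (fun s => f s * g s) x (df * g x + f x * dg).
Proof. rewrite !is_derive_Reals. intros. apply (derivable_pt_lim_mult f g); auto. Qed.
Lemma der_const (c x : R) : is_derive (fun _ => c) x 0.
Proof. rewrite is_derive_Reals. apply derivable_pt_lim_const. Qed.
Lemma der_opp f x df : is_derive f x df -> is_derive (fun s => - f s) x (- df).
Proof. rewrite !is_derive_Reals. intros. apply (derivable_pt_lim_opp f); auto. Qed.

Lemma der_ext (f g : R -> R) (x l : R) : (forall s, f s = g s) -> is_derive f x l -> is_derive g x l.
Proof. intros H. replace g with f; auto. apply functional_extensionality; auto. Qed.

Lemma der_sp n (u v : R -> point) (u' v' : point) t :
  (forall i, (i <= n)%nat -> is_derive (fun s => u s i) t (u' i)) ->
  (forall i, (i <= n)%nat -> is_derive (fun s => v s i) t (v' i)) ->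
  is_derive (fun s => space_part n (u s) (v s)) t (space_part n u' (v t) + space_part n (u t) v').
Proof.
  intros Hu Hv. induction n; simpl.
  - replace (0+0) with 0 by ring. apply der_const.
  - replace (space_part n u' (v t) + u' (S n) * v t (S n) + (space_part n (u t) v' + u t (S n) * v' (S n)))
     with ((space_part n u' (v t) + space_part n (u t) v') + (u' (S n) * v t (S n) + u t (S n) * v' (S n))) by ring.
    apply (der_plus (fun s => space_part n (u s) (v s)) (fun s => u s (S n) * v s (S n))). apply IHn; auto.
    apply (der_mult (fun s => u s (S n)) (fun s => v s (S n))); auto.
Qed.

Lemma der_mink n (u v : R -> point) (u' v' : point) t :
  (forall i, (i <= n)%nat -> is_derive (fun s => u s i) t (u' i)) ->
  (forall i, (i <= n)%nat -> is_derive (fun s => v s i) t (v' i)) ->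
  is_derive (fun s => mink n (u s) (v s)) t (mink n u' (v t) + mink n (u t) v').
Proof.
  intros Hu Hv. unfold mink.
  replace (- u' 0%nat * v t 0%nat + space_part n u' (v t) + (- u t 0%nat * v' 0%nat + space_part n (u t) v'))
    with ((- (u' 0%nat * v t 0%nat + u t 0%nat * v' 0%nat)) + (space_part n u' (v t) + space_part n (u t) v')) by ring.
  apply (der_plus (fun s => - u s 0%nat * v s 0%nat) (fun s => space_part n (u s) (v s))).
  - apply (der_ext (fun s => - (u s 0%nat * v s 0%nat))). intros; ring.
    refine (der_opp (fun s => u s 0%nat * v s 0%nat) t _ _).
    refine (der_mult (fun s => u s 0%nat) (fun s => v s 0%nat) t _ _ _ _); auto with arith.
  - apply der_sp; auto.
Qed.

Lemma der_mink_c n (u : R -> point) (u' z : point) t :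
  (forall i, (i <= n)%nat -> is_derive (fun s => u s i) t (u' i)) ->
  is_derive (fun s => mink n (u s) z) t (mink n u' z).
Proof.
  intros Hu. pose proof (der_mink n u (fun _ => z) u' (fun _ => 0) t Hu).
  replace (mink n u' z) with (mink n u' z + mink n (u t) (fun _ => 0)).
  apply H. intros; apply der_const.
  unfold mink. replace (space_part n (u t) (fun _ => 0)) with 0. ring.
  clear; induction n; simpl; auto. rewrite <- IHn; ring.
Qed.

Lemma deriv_const_zero f a b t l c : a < b -> a <= t <= b -> is_derive f t l ->
  (forall s, a <= s <= b -> f s = c) -> l = 0.
Proof.
  intros Hab Ht Hd Hc. apply is_derive_Reals in Hd.
  destruct (Req_dec l 0) as [E|E]; auto. exfalso.
  destruct (Hd (Rabs l) (Rabs_pos_lt _ E)) as [d Hdd].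
  pose (h0 := Rmin (d/2) ((b-a)/2)).
  assert (0 < h0) by (unfold h0; apply Rmin_pos; destruct d; simpl; lra).
  assert (h0 < d) by (unfold h0; pose proof (Rmin_l (d/2) ((b-a)/2)); destruct d; simpl in *; lra).
  assert (h0 <= (b-a)/2) by (unfold h0; apply Rmin_r).
  destruct (Rle_lt_dec t ((a+b)/2)).
  - specialize (Hdd h0). rewrite (Hc t), (Hc (t+h0)) in Hdd by lra.
    replace ((c - c)/h0 - l) with (- l) in Hdd by (field; lra). rewrite Rabs_Ropp in Hdd.
    assert (Rabs h0 < d) by (rewrite Rabs_right; lra). specialize (Hdd ltac:(lra) H2). lra.
  - specialize (Hdd (-h0)). rewrite (Hc t), (Hc (t+-h0)) in Hdd by lra.
    replace ((c - c)/(-h0) - l) with (- l) in Hdd by (field; lra). rewrite Rabs_Ropp in Hdd.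
    assert (Rabs h0 < d) by (rewrite Rabs_right; lra). specialize (Hdd ltac:(lra) H2). rewrite ?Rabs_Ropp in Hdd. lra.
Qed.

End PB.
Import PB.

Module PC.

Definition CH n K a b (g g1 g2 : R -> point) :=
  0 <= K < 1 /\ a < b /\ (forall t, a <= t <= b -> inH n (g t)) /\
  (forall t i, a <= t <= b -> (i <= n)%nat -> is_derive (fun s => g s i) t (g1 t i)) /\
  (forall t i, a <= t <= b -> (i <= n)%nat -> is_derive (fun s => g1 s i) t (g2 t i)) /\
  (forall t, a <= t <= b -> mink n (g1 t) (g1 t) = 1) /\
  (forall t, a <= t <= b -> geod_curvature n g g2 t <= K).

Section S.
Variables (n : nat) (K a b : R) (g g1 g2 : R -> point).
Hypothesis H : CH n K a b g g1 g2.

Lemma F0 t : a <= t <= b -> mink n (g t) (g t) = -1.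
Proof. destruct H as (_&_&Hg&_). intros Ht; apply Hg; auto. Qed.

Lemma F1 t : a <= t <= b -> mink n (g1 t) (g t) = 0.
Proof.
  intros Ht. destruct H as (HK&Hab&Hg&Hd1&Hd2&Hu&Hc).
  pose proof (der_mink n g g (g1 t) (g1 t) t (fun i Hi => Hd1 t i Ht Hi) (fun i Hi => Hd1 t i Ht Hi)).
  pose proof (deriv_const_zero _ a b t _ (-1) Hab Ht H0 (fun s Hs => proj1 (Hg s Hs))).
  rewrite (mink_sym n (g t)) in H1. lra.
Qed.

Lemma F3 t : a <= t <= b -> mink n (g2 t) (g1 t) = 0.
Proof.
  intros Ht. destruct H as (HK&Hab&Hg&Hd1&Hd2&Hu&Hc).
  pose proof (der_mink n g1 g1 (g2 t) (g2 t) t (fun i Hi => Hd2 t i Ht Hi) (fun i Hi => Hd2 t i Ht Hi)).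
  pose proof (deriv_const_zero _ a b t _ 1 Hab Ht H0 Hu).
  rewrite (mink_sym n (g1 t)) in H1. lra.
Qed.

Lemma F2 t : a <= t <= b -> mink n (g2 t) (g t) = -1.
Proof.
  intros Ht. pose proof H as H'. destruct H' as (HK&Hab&Hg&Hd1&Hd2&Hu&Hc).
  pose proof (der_mink n g1 g (g2 t) (g1 t) t (fun i Hi => Hd2 t i Ht Hi) (fun i Hi => Hd1 t i Ht Hi)).
  pose proof (deriv_const_zero _ a b t _ 0 Hab Ht H0 F1).
  rewrite Hu in H1 by auto. lra.
Qed.

Definition NN t := cov_accel n g g2 t.

Lemma N_lin t z : a <= t <= b -> mink n (NN t) z = mink n (g2 t) z - mink n (g t) z.
Proof.
  intros Ht. unfold NN, cov_accel. rewrite mink_add, mink_scal, F2 by auto. ring.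
Qed.

Lemma N_g t : a <= t <= b -> mink n (NN t) (g t) = 0.
Proof. intros Ht. rewrite N_lin, F2, F0 by auto. ring. Qed.
Lemma N_g1 t : a <= t <= b -> mink n (NN t) (g1 t) = 0.
Proof. intros Ht. rewrite N_lin, F3, (mink_sym n (g t)), F1 by auto. ring. Qed.

Lemma N_norm t : a <= t <= b -> mink n (NN t) (NN t) <= K * K.
Proof.
  intros Ht. destruct H as (HK&Hab&Hg&Hd1&Hd2&Hu&Hc). specialize (Hc t Ht).
  unfold geod_curvature in Hc. fold (NN t) in Hc.
  destruct (Rle_lt_dec (mink n (NN t) (NN t)) 0). nra.
  pose proof (sqrt_sqrt (mink n (NN t) (NN t)) ltac:(lra)). pose proof (sqrt_pos (mink n (NN t) (NN t))). nra.
Qed.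

Definition W t (p : point) : point :=
  fun i => p i + (mink n p (g t)) * g t i + (- mink n p (g1 t)) * g1 t i.

Lemma W_g t p : a <= t <= b -> mink n (W t p) (g t) = 0.
Proof. intros Ht; unfold W. rewrite !mink_add, !mink_scal, F0, F1 by auto. ring. Qed.

Lemma Fu t : a <= t <= b -> mink n (g1 t) (g1 t) = 1.
Proof. destruct H as (_&_&_&_&_&Hu&_). auto. Qed.

Lemma W_norm t p : a <= t <= b ->
  mink n (W t p) (W t p) = mink n p p + mink n p (g t) * mink n p (g t) - mink n p (g1 t) * mink n p (g1 t).
Proof.
  intros Ht; unfold W. rewrite !mink_add, !mink_scal, !mink_addr, !mink_scalr.
  rewrite F0, F1, (mink_sym n (g t) (g1 t)), F1, Fu, (mink_sym n (g t) p), (mink_sym n (g1 t) p) by auto. ring.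
Qed.

Lemma W_N t p : a <= t <= b -> mink n (NN t) (W t p) = mink n (NN t) p.
Proof. intros Ht; unfold W. rewrite !mink_addr, !mink_scalr, N_g, N_g1 by auto. ring. Qed.

Lemma G_nonneg t p : a <= t <= b ->
  0 <= mink n p p + mink n p (g t) * mink n p (g t) - mink n p (g1 t) * mink n p (g1 t).
Proof. intros Ht. rewrite <- W_norm by auto. apply (perp_nonneg n (g t)). apply F0; auto. apply W_g; auto. Qed.

Lemma G_cs t p : a <= t <= b ->
  mink n (NN t) p * mink n (NN t) p <=
  K * K * (mink n p p + mink n p (g t) * mink n p (g t) - mink n p (g1 t) * mink n p (g1 t)).
Proof.
  intros Ht. rewrite <- W_N, <- W_norm by auto.
  pose proof (mink_cs_perp n (g t) (NN t) (W t p) (F0 t Ht) (N_g t Ht) (W_g t p Ht)).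
  pose proof (N_norm t Ht). pose proof (perp_nonneg n (g t) (W t p) (F0 t Ht) (W_g t p Ht)).
  nra.
Qed.
End S.

End PC.
Import PC.

Module PD.

Lemma der_cont (f : R -> R) t l : is_derive f t l -> continuity_pt f t.
Proof.
  intros Hd. apply continuity_pt_filterlim. apply (ex_derive_continuous f t). exists l; auto.
Qed.

Lemma loc_incr (f : R -> R) t l : is_derive f t l -> 0 < l ->
  exists d, 0 < d /\ forall h, 0 < h < d -> f t < f (t+h) /\ f (t-h) < f t.
Proof.
  intros Hd Hl. apply is_derive_Reals in Hd. destruct (Hd l Hl) as [d Hdd].
  exists d. split. destruct d; simpl; lra. intros h Hh.
  pose proof (Hdd h ltac:(lra) ltac:(rewrite Rabs_right; lra)).
  pose proof (Hdd (-h) ltac:(lra) ltac:(rewrite Rabs_Ropp, Rabs_right; lra)).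
  apply Rabs_def2 in H. apply Rabs_def2 in H0. destruct H, H0.
  split.
  - assert (0 < (f (t+h) - f t)/h) by lra.
    assert (0 < (f (t+h) - f t)/h * h) by (apply Rmult_lt_0_compat; lra).
    unfold Rdiv in H4. rewrite Rmult_assoc, Rinv_l in H4; lra.
  - assert (0 < (f (t+-h) - f t)/(-h)) by lra.
    assert (0 < (f (t+-h) - f t)/(-h) * h) by (apply Rmult_lt_0_compat; lra).
    replace ((f (t + - h) - f t) / - h * h) with (f t - f (t - h)) in H4 by (unfold Rminus; field; lra).
    lra.
Qed.

Lemma max_contra (v v1 : R -> R) a b t l :
  a < t < b -> (forall s, a <= s <= b -> is_derive v s (v1 s)) -> is_derive v1 t l -> 0 < l ->
  exists s, a <= s <= b /\ v t < v s.
Proof.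
  intros Ht Hd Hd1 Hl. destruct (loc_incr v1 t l Hd1 Hl) as (d & Hd0 & Hinc).
  destruct (Rle_lt_dec 0 (v1 t)) as [P|P].
  - set (h := Rmin d (b - t) / 2).
    assert (0 < h) by (unfold h; apply Rmin_case; lra).
    assert (h < d) by (unfold h; pose proof (Rmin_l d (b-t)); lra).
    assert (h < b - t) by (unfold h; pose proof (Rmin_r d (b-t)); lra).
    destruct (MVT_cor2 v v1 t (t+h) ltac:(lra)) as (c & Hc & Hc2).
    { intros c Hc. apply is_derive_Reals, Hd; lra. }
    exists (t+h). split. lra.
    destruct (Hinc (c - t) ltac:(lra)) as [Q _]. replace (t + (c-t)) with c in Q by ring.
    assert (0 < v1 c * (t + h - t)) by (apply Rmult_lt_0_compat; lra). lra.
  - set (h := Rmin d (t - a) / 2).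
    assert (0 < h) by (unfold h; apply Rmin_case; lra).
    assert (h < d) by (unfold h; pose proof (Rmin_l d (t-a)); lra).
    assert (h < t - a) by (unfold h; pose proof (Rmin_r d (t-a)); lra).
    destruct (MVT_cor2 v v1 (t-h) t ltac:(lra)) as (c & Hc & Hc2).
    { intros c Hc. apply is_derive_Reals, Hd; lra. }
    exists (t-h). split. lra.
    destruct (Hinc (t - c) ltac:(lra)) as [_ Q]. replace (t - (t-c)) with c in Q by ring.
    assert (v1 c * (t - (t - h)) < 0).
    { replace (v1 c * (t - (t - h))) with (- ((- v1 c) * h)) by ring.
      assert (0 < (- v1 c) * h) by (apply Rmult_lt_0_compat; lra). lra. }
    lra.
Qed.

Definition clamp a b t := Rmax a (Rmin b t).

Lemma clamp_in a b t : a <= b -> a <= clamp a b t <= b.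
Proof. intros; unfold clamp. split. apply Rmax_l. apply Rmax_lub. lra. apply Rmin_l. Qed.
Lemma clamp_id a b t : a <= t <= b -> clamp a b t = t.
Proof. intros; unfold clamp. rewrite Rmin_right by lra. rewrite Rmax_right; lra. Qed.

Lemma clamp_lip a b x y : a <= b -> Rabs (clamp a b x - clamp a b y) <= Rabs (x - y).
Proof.
  intros. unfold clamp, Rmax, Rmin.
  repeat destruct Rle_dec; unfold Rabs; repeat destruct Rcase_abs; lra.
Qed.

Lemma clamp_cont_pt a b t : a <= b -> continuity_pt (clamp a b) t.
Proof.
  intros Hab eps He. exists eps. split; auto. intros x [_ Hx]. simpl in *. unfold R_dist in *.
  eapply Rle_lt_trans. apply clamp_lip; auto. auto.
Qed.

Lemma clamp_cont a b (f : R -> R) : a <= b -> (forall t, a <= t <= b -> continuity_pt f t) ->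
  continuity (fun t => f (clamp a b t)).
Proof.
  intros Hab Hf t. apply (continuity_pt_comp (clamp a b) f). apply clamp_cont_pt; auto.
  apply Hf. apply clamp_in; auto.
Qed.

Lemma IVT_ab (f : R -> R) a b : a <= b -> (forall t, a <= t <= b -> continuity_pt f t) ->
  f a <= 0 -> 0 <= f b -> exists t, a <= t <= b /\ f t = 0.
Proof.
  intros Hab Hf Ha Hb. 
  destruct (IVT_gen (fun t => f (clamp a b t)) a b 0 (clamp_cont a b f Hab Hf)) as [t [Ht Hft]].
  { rewrite !clamp_id by lra. split. apply Rle_trans with (f a). apply Rmin_l. auto.
    apply Rle_trans with (f b). auto. apply Rmax_r. }
  rewrite Rmin_left, Rmax_right in Ht by lra. exists t. rewrite clamp_id in Hft; auto.
Qed.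

End PD.
Import PD.

Module PE.

Section S.
Variables (n : nat) (K a b : R) (g g1 g2 : R -> point).
Hypothesis H : CH n K a b g g1 g2.

Lemma cpos : 0 < sqrt (1 - K*K).
Proof. destruct H as (HK&_). apply sqrt_lt_R0. nra. Qed.

Lemma csq : sqrt (1 - K*K) * sqrt (1 - K*K) = 1 - K*K.
Proof. destruct H as (HK&_). apply sqrt_sqrt. nra. Qed.

Lemma v_der z s : a <= s <= b -> is_derive (fun s => mink n (g s) z) s (mink n (g1 s) z).
Proof. destruct H as (HK&Hab&Hg&Hd1&Hd2&_). intros; apply der_mink_c; auto. Qed.
Lemma v1_der z s : a <= s <= b -> is_derive (fun s => mink n (g1 s) z) s (mink n (g2 s) z).
Proof. destruct H as (HK&Hab&Hg&Hd1&Hd2&_). intros; apply der_mink_c; auto. Qed.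

Lemma M1 z : mink n z z = 1 ->
  mink n (g a) z <= K / sqrt (1 - K*K) -> mink n (g b) z <= K / sqrt (1 - K*K) ->
  forall t, a <= t <= b -> mink n (g t) z <= K / sqrt (1 - K*K).
Proof.
  intros Hz Ha Hb t Ht. pose proof H as H'. destruct H' as (HK&Hab&_).
  set (v := fun s => mink n (g s) z).
  destruct (continuity_ab_maj v a b ltac:(lra)) as (m & Hm & Hmab).
  { intros c Hc. apply (der_cont _ _ _ (v_der z c Hc)). }
  set (KC := K / sqrt (1 - K*K)) in *.
  destruct (Rle_lt_dec (v m) KC) as [L|L].
  { apply Rle_trans with (v m); auto. apply Hm; auto. }
  exfalso.
  assert (a < m < b).
  { split; destruct (Rle_lt_dec m a) as [E|E]; try lra; destruct (Rle_lt_dec b m) as [E2|E2]; try lra;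
    assert (m = a \/ m = b) as [->| ->] by lra; unfold v in L; lra. }
  pose proof cpos. pose proof csq.
  assert (HvK : K * K < v m * v m * (1 - K*K)).
  { assert (K < v m * sqrt (1 - K*K)).
    { unfold KC in L. apply Rmult_lt_compat_r with (r := sqrt (1-K*K)) in L; auto.
      unfold Rdiv in L. rewrite Rmult_assoc, Rinv_l in L; lra. }
    nra. }
  pose proof (G_cs n K a b g g1 g2 H m z ltac:(lra)).
  rewrite (N_lin n K a b g g1 g2 H) in H3 by lra. rewrite Hz, (mink_sym n z (g m)), (mink_sym n z (g1 m)) in H3.
  fold (v m) in H3.
  assert (0 < v m) by (unfold KC in L; assert (0 <= K / sqrt (1-K*K)) by (apply Rdiv_le_0_compat; lra); lra).
  assert (0 < mink n (g2 m) z).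
  { set (x := mink n (g2 m) z - v m) in *. set (w := mink n (g1 m) z) in *.
    assert (x * x < v m * v m) by nra.
    assert (x > - v m) by nra. unfold x in H6. lra. }
  destruct (max_contra v (fun s => mink n (g1 s) z) a b m (mink n (g2 m) z) H0) as (s & Hs & Hvs); auto.
  { intros; apply v_der; auto. }
  { apply v1_der; lra. }
  specialize (Hm s Hs). lra.
Qed.
End S.

End PE.
Import PE.

Module PF.

Section S.
Variables (n : nat) (K a b : R) (g g1 g2 : R -> point).
Hypothesis H : CH n K a b g g1 g2.
Variable s : R.
Hypothesis Hs : a <= s <= b.

Definition hh σ := - mink n (g σ) (g s).
Definition h1 σ := - mink n (g1 σ) (g s).
Definition h2 σ := - mink n (g2 σ) (g s).
Definition SS σ := sqrt (hh σ * hh σ - 1).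

Lemma hh_ge1 σ : a <= σ <= b -> 1 <= hh σ.
Proof. destruct H as (_&_&Hg&_). intros; apply inH_ge1; auto. Qed.
Lemma hh_s : hh s = 1.
Proof. unfold hh; rewrite (F0 n K a b g g1 g2 H) by auto; ring. Qed.
Lemma h1_s : h1 s = 0.
Proof. unfold h1; rewrite (F1 n K a b g g1 g2 H) by auto; ring. Qed.
Lemma h2_s : h2 s = 1.
Proof. unfold h2; rewrite (F2 n K a b g g1 g2 H) by auto; ring. Qed.
Lemma h1_sq σ : a <= σ <= b -> h1 σ * h1 σ <= hh σ * hh σ - 1.
Proof.
  intros Hσ. pose proof (G_nonneg n K a b g g1 g2 H σ (g s) Hσ).
  rewrite (F0 n K a b g g1 g2 H s Hs), (mink_sym n (g s) (g σ)), (mink_sym n (g s) (g1 σ)) in H0.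
  unfold hh, h1. nra.
Qed.
Lemma h2_eq σ : a <= σ <= b -> h2 σ = hh σ - mink n (NN n g g2 σ) (g s).
Proof. intros Hσ. rewrite (N_lin n K a b g g1 g2 H) by auto. unfold h2, hh; ring. Qed.
Lemma Ncs σ : a <= σ <= b -> mink n (NN n g g2 σ) (g s) * mink n (NN n g g2 σ) (g s) <=
   K * K * (hh σ * hh σ - 1 - h1 σ * h1 σ).
Proof.
  intros Hσ. pose proof (G_cs n K a b g g1 g2 H σ (g s) Hσ).
  rewrite (F0 n K a b g g1 g2 H s Hs), (mink_sym n (g s) (g σ)), (mink_sym n (g s) (g1 σ)) in H0.
  unfold hh, h1. replace (K * K * (- mink n (g σ) (g s) * - mink n (g σ) (g s) - 1 - - mink n (g1 σ) (g s) * - mink n (g1 σ) (g s)))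
    with (K * K * (-1 + mink n (g σ) (g s) * mink n (g σ) (g s) - mink n (g1 σ) (g s) * mink n (g1 σ) (g s))) by ring. auto.
Qed.
Lemma hh_der σ : a <= σ <= b -> is_derive hh σ (h1 σ).
Proof. intros. unfold hh, h1. apply (der_opp (fun σ => mink n (g σ) (g s))). apply (v_der n K a b g g1 g2 H); auto. Qed.
Lemma h1_der σ : a <= σ <= b -> is_derive h1 σ (h2 σ).
Proof. intros. unfold h1, h2. apply (der_opp (fun σ => mink n (g1 σ) (g s))). apply (v1_der n K a b g g1 g2 H); auto. Qed.
Lemma hh_cont σ : a <= σ <= b -> continuity_pt hh σ.
Proof. intros; eapply der_cont; apply hh_der; auto. Qed.
Lemma h1_cont σ : a <= σ <= b -> continuity_pt h1 σ.
Proof. intros; eapply der_cont; apply h1_der; auto. Qed.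
Lemma SS_cont σ : a <= σ <= b -> continuity_pt SS σ.
Proof.
  intros. unfold SS. apply (continuity_pt_comp (fun σ => hh σ * hh σ - 1) sqrt).
  apply (continuity_pt_minus (fun σ => hh σ * hh σ) (fun _ => 1)).
  apply (continuity_pt_mult hh hh); apply hh_cont; auto. apply continuity_pt_const; intros x y; auto.
  apply continuity_pt_sqrt. pose proof (hh_ge1 σ H0). nra.
Qed.
Lemma SS_sq σ : a <= σ <= b -> SS σ * SS σ = hh σ * hh σ - 1.
Proof. intros. unfold SS. apply sqrt_sqrt. pose proof (hh_ge1 σ H0). nra. Qed.
Lemma SS_pos σ : 0 <= SS σ.
Proof. apply sqrt_pos. Qed.
Lemma SS_der σ : a <= σ <= b -> 1 < hh σ -> is_derive SS σ (hh σ * h1 σ / SS σ).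
Proof.
  intros Hσ Hh. unfold SS.
  replace (hh σ * h1 σ / sqrt (hh σ * hh σ - 1)) with ((h1 σ * hh σ + hh σ * h1 σ) / (2 * sqrt (hh σ * hh σ - 1))).
  2:{ field. apply Rgt_not_eq, sqrt_lt_R0. nra. }
  apply (is_derive_sqrt (fun σ => hh σ * hh σ - 1)); [|nra].
  replace (h1 σ * hh σ + hh σ * h1 σ) with ((h1 σ * hh σ + hh σ * h1 σ) - 0) by ring.
  apply (der_plus (fun σ => hh σ * hh σ) (fun _ => -1)).
  apply der_mult; apply hh_der; auto.
  replace (-0) with 0 by ring. apply der_const.
Qed.
End S.

End PF.
Import PF.

Module PG.

Lemma cont_pos (f : R -> R) x : continuity_pt f x -> 0 < f x ->
  exists alp, 0 < alp /\ forall y, Rabs (y - x) < alp -> 0 < f y.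
Proof.
  intros Hc Hf. destruct (Hc (f x) Hf) as (alp & Ha & Hy). exists alp. split; auto.
  intros y Hyx. destruct (Req_dec y x) as [->|E]; auto.
  assert (R_dist (f y) (f x) < f x). apply Hy. split. split; auto. unfold no_cond; auto. auto.
  unfold R_dist in H. apply Rabs_def2 in H. lra.
Qed.

Lemma der_exp_lin l s (x : R) : is_derive (fun τ => exp (- (l * (τ - s)))) x (- l * exp (- (l * (x - s)))).
Proof. auto_derive. auto. unfold Rminus; ring. Qed.
Lemma der_quad e s (x : R) : is_derive (fun τ => -((1+e)/2) * ((τ - s)*(τ-s))) x (-(1+e)*(x-s)).
Proof. auto_derive. auto. unfold Rminus; field. Qed.

Lemma sq_lt x y : 0 <= x -> x < y -> x*x < y*y.
Proof. intros; nra. Qed.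
Lemma sq_lt_rev x y : 0 <= x -> 0 <= y -> x*x < y*y -> x < y.
Proof. intros. destruct (Rlt_le_dec x y); auto. nra. Qed.

Section S.
Variables (n : nat) (K a b : R) (g g1 g2 : R -> point).
Hypothesis H : CH n K a b g g1 g2.
Variable s : R.
Hypothesis Hs : a <= s < b.
Variable c' : R.
Hypothesis Hc1 : 0 < c'.
Hypothesis Hc2 : c' * c' < 1 - K * K.

Let Hs' : a <= s <= b. Proof. lra. Qed.
Let hh := hh n g s.
Let h1 := h1 n g g1 s.
Let h2 := h2 n g g2 s.
Let SS := SS n g s.
Definition FF σ := h1 σ - c' * SS σ.
Definition PP σ := 1 < hh σ /\ 0 < FF σ.

Let HK : 0 <= K < 1. Proof. destruct H; auto. Qed.
Let Hab : a < b. Proof. destruct H as (_&?&_); auto. Qed.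
Let Hc3 : c' < 1. Proof. nra. Qed.

Let Whh_der σ : a <= σ <= b -> is_derive hh σ (h1 σ). Proof. intros; eapply hh_der; eauto. Qed.
Let Wh1_der σ : a <= σ <= b -> is_derive h1 σ (h2 σ). Proof. intros; eapply h1_der; eauto. Qed.
Let Whh_s : hh s = 1. Proof. eapply hh_s; eauto. Qed.
Let Wh1_s : h1 s = 0. Proof. eapply h1_s; eauto. Qed.
Let Wh2_s : h2 s = 1. Proof. eapply h2_s; eauto. Qed.
Let WSS_sq σ : a <= σ <= b -> SS σ * SS σ = hh σ * hh σ - 1. Proof. intros; eapply SS_sq; eauto. Qed.
Let WSS_pos σ : 0 <= SS σ. Proof. eapply SS_pos. Qed.
Let WSS_der σ : a <= σ <= b -> 1 < hh σ -> is_derive SS σ (hh σ * h1 σ / SS σ). Proof. intros; eapply SS_der; eauto. Qed.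
Let WSS_cont σ : a <= σ <= b -> continuity_pt SS σ. Proof. intros; eapply SS_cont; eauto. Qed.
Let Whh_cont σ : a <= σ <= b -> continuity_pt hh σ. Proof. intros; eapply hh_cont; eauto. Qed.
Let Wh1_cont σ : a <= σ <= b -> continuity_pt h1 σ. Proof. intros; eapply h1_cont; eauto. Qed.
Let Wh2_eq σ : a <= σ <= b -> h2 σ = hh σ - mink n (NN n g g2 σ) (g s). Proof. intros; eapply h2_eq; eauto. Qed.
Let WNcs σ : a <= σ <= b -> mink n (NN n g g2 σ) (g s) * mink n (NN n g g2 σ) (g s) <=
   K * K * (hh σ * hh σ - 1 - h1 σ * h1 σ). Proof. intros; eapply Ncs; eauto. Qed.
Let Wh1_sq σ : a <= σ <= b -> h1 σ * h1 σ <= hh σ * hh σ - 1. Proof. intros; eapply h1_sq; eauto. Qed.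
Let Whh_ge1 σ : a <= σ <= b -> 1 <= hh σ. Proof. intros; eapply hh_ge1; eauto. Qed.

Lemma init : exists d, 0 < d /\ forall σ, s < σ < s + d -> σ <= b -> PP σ.
Proof.
  set (ε := (1 - c')/4).
  assert (Hε : 0 < ε) by (unfold ε; lra).
  assert (Hε4 : ε <= 1/4) by (unfold ε; lra).
  pose proof (Wh1_der s Hs') as Hd. apply is_derive_Reals in Hd.
  rewrite Wh2_s in Hd.
  destruct (Hd ε Hε) as (δ1 & Hδ1).
  assert (Hv : forall v, 0 < v < δ1 -> (1-ε)*v < h1 (s+v) < (1+ε)*v).
  { intros v Hv. specialize (Hδ1 v ltac:(lra) ltac:(rewrite Rabs_right; lra)).
    fold h1 in Hδ1. rewrite Wh1_s in Hδ1.
    apply Rabs_def2 in Hδ1. destruct Hδ1 as [Q1 Q2].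
    assert (Hq: (h1 (s+v) - 0)/v = h1 (s+v) / v) by (f_equal; ring). rewrite Hq in Q1, Q2.
    assert (h1 (s+v) = (h1 (s+v)/v) * v) by (field; lra).
    split; rewrite H0; apply Rmult_lt_compat_r; lra. }
  exists (Rmin δ1 ε). split. apply Rmin_case; destruct δ1; simpl; lra.
  intros σ Hσ Hσb. set (u := σ - s). assert (Hudef : u = σ - s) by reflexivity.
  assert (Hu1 : u < δ1) by (unfold u; pose proof (Rmin_l δ1 ε); lra).
  assert (Hu2 : u < ε) by (unfold u; pose proof (Rmin_r δ1 ε); lra).
  assert (Hu0 : 0 < u) by (unfold u; lra).
  destruct (MVT_cor2 hh h1 s σ ltac:(lra)) as (ξ & Hξ & Hξ2).
  { intros c Hc. apply is_derive_Reals. apply Whh_der. lra. }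

  assert (E0: hh s = 1) by apply Whh_s.
  destruct (Hv (ξ - s) ltac:(lra)) as [Hξ3 _]. replace (s + (ξ - s)) with ξ in Hξ3 by ring.
  assert (Hh1 : 1 < hh σ).
  { assert (0 < (1-ε)*(ξ-s)) by (apply Rmult_lt_0_compat; unfold ε; lra).
    assert (0 < h1 ξ * (σ - s)) by (apply Rmult_lt_0_compat; lra). lra. }
  destruct (MVT_cor2 (fun τ => hh τ + -((1+ε)/2) * ((τ - s)*(τ-s))) (fun τ => h1 τ + -(1+ε)*(τ-s)) s σ ltac:(lra))
    as (ζ & Hζ & Hζ2).
  { intros c Hc. apply is_derive_Reals. apply (der_plus hh). apply Whh_der. lra.
    apply der_quad. }
  destruct (Hv (ζ - s) ltac:(lra)) as [_ Hζ3]. replace (s + (ζ - s)) with ζ in Hζ3 by ring.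
  assert (Hup : hh σ - 1 <= (1+ε)/2 * (u*u)).
  { assert ((h1 ζ + - (1 + ε) * (ζ - s)) * (σ - s) < 0).
    { replace ((h1 ζ + - (1 + ε) * (ζ - s)) * (σ - s)) with (- (((1 + ε) * (ζ - s) - h1 ζ) * (σ - s))) by ring.
      assert (0 < ((1 + ε) * (ζ - s) - h1 ζ) * (σ - s)) by (apply Rmult_lt_0_compat; lra). lra. }
    cbv beta in Hζ. rewrite E0 in Hζ. replace (s - s) with 0 in Hζ by ring. rewrite Hudef. nra. }
  destruct (Hv u ltac:(lra)) as [Hl _]. replace (s + u) with σ in Hl by (unfold u; ring).
  assert (HSS : SS σ * SS σ = hh σ * hh σ - 1) by (apply WSS_sq; lra).
  pose proof (WSS_pos σ) as HSp.
  split; auto. unfold FF.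
  set (A := hh σ - 1) in *. assert (Adef : A = hh σ - 1) by reflexivity.
  assert (HA0 : 0 < A) by lra.
  assert (HS2 : SS σ * SS σ <= (1+ε)*(1+ε)*(u*u)).
  { replace (hh σ * hh σ - 1) with (A * (A + 2)) in HSS by (unfold A; ring).
    assert (A * (A+2) <= ((1+ε)/2*(u*u)) * ((1+ε)/2*(u*u) + 2)) by (apply Rmult_le_compat; lra).
    assert (u * u <= ε * ε) by nra. assert (ε <= 1/4) by (unfold ε; lra).
    nra. }
  assert (c' * (1+ε) < 1 - ε).
  { assert (Hx: 0 < (1-c')*(3-c')) by (apply Rmult_lt_0_compat; lra).
    replace (1 - ε - c' * (1+ε)) with ((1-c')*(3-c')/4) by (unfold ε; field). 
    enough (0 < 1 - ε - c' * (1+ε)) by lra.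
    replace (1 - ε - c' * (1+ε)) with ((1-c')*(3-c')/4) by (unfold ε; field). lra. }
  assert (c' * SS σ * (c' * SS σ) < h1 σ * h1 σ).
  { assert (c'*c' * (SS σ * SS σ) <= c' * c' * ((1+ε)*(1+ε)*(u*u))) by (apply Rmult_le_compat_l; [nra|lra]).
    assert ((c' * (1+ε)) * (c' * (1+ε)) < (1 - ε) * (1-ε)) by (apply sq_lt; [nra|lra]).
    assert ((1-ε)*u * ((1-ε)*u) < h1 σ * h1 σ) by (apply sq_lt; [apply Rmult_le_pos; lra|lra]).
    assert ((c' * (1+ε)) * (c' * (1+ε)) * (u*u) < (1 - ε) * (1-ε) * (u*u)) by (apply Rmult_lt_compat_r; nra).
    nra. }
  apply sq_lt_rev in H1; [lra| |]. apply Rmult_le_pos; lra. 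
  assert (0 < (1-ε)*u) by (apply Rmult_lt_0_compat; lra). lra.
Qed.

Lemma FF_cont σ : a <= σ <= b -> continuity_pt FF σ.
Proof.
  intros. unfold FF. apply (continuity_pt_minus h1 (fun σ => c' * SS σ)). auto.
  apply (continuity_pt_scal SS). auto.
Qed.

Lemma FF_der σ : a <= σ <= b -> 1 < hh σ -> is_derive FF σ (h2 σ - c' * (hh σ * h1 σ / SS σ)).
Proof.
  intros. unfold FF. unfold Rminus. apply (der_plus h1 (fun σ => - (c' * SS σ))). auto.
  apply (der_opp (fun σ => c' * SS σ)). apply is_derive_scal. auto.
Qed.

Lemma FF_der_pos σ : a <= σ <= b -> 1 < hh σ -> FF σ = 0 -> 0 < h2 σ - c' * (hh σ * h1 σ / SS σ).
Proof.
  intros Hσ Hh HF. unfold FF in HF.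
  pose proof (WSS_sq σ Hσ). pose proof (WSS_pos σ).
  assert (0 < SS σ). { destruct (Req_dec (SS σ) 0) as [E|E]. rewrite E in H0. nra. lra. }
  assert (E1 : h1 σ = c' * SS σ) by lra.
  replace (c' * (hh σ * h1 σ / SS σ)) with (c' * c' * hh σ) by (rewrite E1; field; lra).
  rewrite Wh2_eq by auto.
  pose proof (WNcs σ Hσ). set (x := mink n (NN n g g2 σ) (g s)) in *.
  rewrite E1 in H3.
  set (L := 1 - c' * c').
  assert (HL : K * K < L) by (unfold L; lra).
  assert (x * x <= K * K * L * (SS σ * SS σ)) by (unfold L; nra).
  assert (K * K * (SS σ * SS σ) <= K * K * (hh σ * hh σ)) by (apply Rmult_le_compat_l; nra).
  assert (K * K * (hh σ * hh σ) < L * (hh σ * hh σ)) by (apply Rmult_lt_compat_r; nra).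
  assert (x * x < (L * hh σ) * (L * hh σ)).
  { assert (0 < L) by nra. 
    assert (K * K * L * (SS σ * SS σ) < L * (L * (hh σ * hh σ))).
    { replace (K * K * L * (SS σ * SS σ)) with (L * (K * K * (SS σ * SS σ))) by ring.
      apply Rmult_lt_compat_l; lra. }
    nra. }
  assert (0 < L * hh σ) by (apply Rmult_lt_0_compat; nra).
  assert (x < L * hh σ) by (destruct (Rlt_le_dec x (L * hh σ)); auto; nra).
  assert (L * hh σ = hh σ - c'*c'*hh σ) by (unfold L; ring). lra.
Qed.

Lemma all_P : forall σ, s < σ <= b -> PP σ.
Proof.
  destruct init as (d & Hd & Hinit).
  set (E := fun τ => s <= τ <= b /\ forall σ, s < σ <= τ -> PP σ).
  destruct (completeness E) as (T & HT1 & HT2).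
  { exists b. intros x Hx. apply Hx. }
  { exists s. split. lra. intros; lra. }
  set (τ1 := Rmin (s + d/2) b).
  assert (Hτ1 : s < τ1) by (unfold τ1; apply Rmin_case; lra).
  assert (E τ1).
  { split. split. lra. apply Rmin_r. intros σ Hσ. apply Hinit. 
    pose proof (Rmin_l (s+d/2) b). fold τ1 in H0. lra. pose proof (Rmin_r (s+d/2) b). fold τ1 in H0. lra. }
  assert (HTb : T <= b). { apply HT2. intros x Hx; apply Hx. }
  assert (HsT : s < T). { pose proof (HT1 τ1 H0). lra. }
  assert (Ltail : forall σ, s < σ < T -> PP σ).
  { intros σ Hσ. destruct (classic (exists τ, E τ /\ σ < τ)) as [(τ & Eτ & Hτ)|NE].
    - apply Eτ. lra.
    - exfalso. assert (T <= σ). apply HT2. intros x Ex. destruct (Rle_lt_dec x σ); auto.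
      exfalso; apply NE; exists x; auto. lra. }
  set (m := (s + T)/2).
  assert (Hm : PP m) by (apply Ltail; unfold m; lra).
  assert (HhT : 1 < hh T).
  { destruct (MVT_cor2 hh h1 m T ltac:(unfold m; lra)) as (ξ & Hξ & Hξ2).
    { intros c Hc. apply is_derive_Reals, Whh_der. unfold m in Hc. lra. }
    assert (PP ξ) by (apply Ltail; unfold m in Hξ2; lra).
    destruct H1 as [_ H1]. unfold FF in H1. pose proof (WSS_pos ξ).
    assert (0 < h1 ξ) by nra.
    assert (0 < h1 ξ * (T - m)) by (apply Rmult_lt_0_compat; unfold m; lra).
    destruct Hm. lra. }
  assert (HTab : a <= T <= b) by lra.
  assert (HFT : 0 < FF T).
  { destruct (Rtotal_order (FF T) 0) as [Hlt|[Heq|Hgt]]; auto; exfalso.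
    - destruct (cont_pos (fun σ => - FF σ) T) as (alp & Ha & Hal).
      { apply (continuity_pt_opp FF). apply FF_cont; auto. }
      { lra. }
      set (σ := T - Rmin alp (T - s) / 2).
      assert (0 < Rmin alp (T - s)) by (apply Rmin_case; lra).
      assert (Rmin alp (T-s) <= alp) by apply Rmin_l.
      assert (Rmin alp (T-s) <= T - s) by apply Rmin_r.
      specialize (Hal σ ltac:(unfold σ; rewrite Rabs_left; lra)).
      destruct (Ltail σ ltac:(unfold σ; lra)). lra.
    - destruct (loc_incr FF T _ (FF_der T HTab HhT) (FF_der_pos T HTab HhT Heq)) as (d' & Hd' & Hinc).
      set (u := Rmin d' (T - s) / 2).
      assert (0 < Rmin d' (T - s)) by (apply Rmin_case; lra).
      assert (Rmin d' (T-s) <= d') by apply Rmin_l.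
      assert (Rmin d' (T-s) <= T - s) by apply Rmin_r.
      destruct (Hinc u ltac:(unfold u; lra)) as [_ Q].
      destruct (Ltail (T - u) ltac:(unfold u; lra)). lra. }
  assert (HPT : PP T) by (split; auto).
  assert (HTeq : T = b).
  { destruct (Rle_lt_dec b T) as [|Hlt]; [lra|exfalso].
    destruct (cont_pos (fun σ => hh σ - 1) T) as (al1 & Ha1 & Hal1).
    { apply (continuity_pt_minus hh (fun _ => 1)). auto. apply continuity_pt_const. intros x y; auto. }
    { lra. }
    destruct (cont_pos FF T) as (al2 & Ha2 & Hal2). apply FF_cont; auto. auto.
    set (al := Rmin al1 al2).
    assert (0 < al) by (unfold al; apply Rmin_case; lra).
    assert (al <= al1) by apply Rmin_l. assert (al <= al2) by apply Rmin_r.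
    set (τ2 := Rmin (T + al/2) b).
    assert (T < τ2) by (unfold τ2; apply Rmin_case; lra).
    assert (τ2 <= T + al/2) by apply Rmin_l. assert (τ2 <= b) by apply Rmin_r.
    assert (E τ2).
    { split. lra. intros σ Hσ. destruct (Rtotal_order σ T) as [Q|[Q|Q]].
      apply Ltail; lra. subst; auto.
      split. pose proof (Hal1 σ ltac:(rewrite Rabs_right; lra)). lra.
      apply Hal2. rewrite Rabs_right; lra. }
    pose proof (HT1 τ2 H7). lra. }
  intros σ Hσ. destruct (Req_dec σ T). subst; auto. apply Ltail. lra.
Qed.

Definition Phi l σ := (hh σ + SS σ) * exp (- (l * (σ - s))).

Lemma SS_s : SS s = 0.
Proof. unfold SS, PF.SS. fold hh. rewrite Whh_s. replace (1*1-1) with 0 by ring. apply sqrt_0. Qed.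

Lemma Phi_s l : Phi l s = 1.
Proof. unfold Phi. rewrite Whh_s, SS_s. replace (- (l * (s - s))) with 0 by ring. rewrite exp_0; ring. Qed.

Lemma Phi_mvt l t : s < t <= b -> Phi l t = 1 \/ exists ξ, s < ξ <= t /\
   Phi l t - 1 = (exp (- (l * (ξ - s))) * (hh ξ + SS ξ) * (h1 ξ - l * SS ξ) / SS ξ) * (t - s).
Proof.
  intros Ht.
  set (df := fun ξ => if Req_dec_T ξ s then 0 else
     (exp (- (l * (ξ - s))) * (hh ξ + SS ξ) * (h1 ξ - l * SS ξ) / SS ξ)).
  destruct (MVT_gen (Phi l) s t df) as (ξ & Hξ & Hξ2).
  - intros x Hx. rewrite Rmin_left, Rmax_right in Hx by lra.
    assert (PP x) by (apply all_P; lra). destruct H0 as [Hh HF].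
    assert (Hxab : a <= x <= b) by lra.
    pose proof (WSS_sq x Hxab). pose proof (WSS_pos x).
    assert (0 < SS x). { destruct (Req_dec (SS x) 0) as [E|E]. rewrite E in H0. nra. lra. }
    unfold df. destruct (Req_dec_T x s); [lra|].
    replace (exp (- (l * (x - s))) * (hh x + SS x) * (h1 x - l * SS x) / SS x) with
      ((h1 x + hh x * h1 x / SS x) * exp (- (l * (x - s))) + (hh x + SS x) * (- l * exp (- (l * (x - s))))) by (field; lra).
    unfold Phi. apply (der_mult (fun σ => hh σ + SS σ) (fun σ => exp (- (l * (σ - s))))).
    apply (der_plus hh SS). auto. auto. apply der_exp_lin.
  - intros x Hx. rewrite Rmin_left, Rmax_right in Hx by lra. unfold Phi.
    apply (continuity_pt_mult (fun σ => hh σ + SS σ) (fun σ => exp (- (l * (σ - s))))).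
    apply (continuity_pt_plus hh SS); [apply Whh_cont|apply WSS_cont]; lra.
    eapply der_cont. apply der_exp_lin.
  - rewrite Rmin_left, Rmax_right in Hξ by lra. rewrite Phi_s in Hξ2.
    unfold df in Hξ2. destruct (Req_dec_T ξ s).
    + left. lra.
    + right. exists ξ. split. lra. auto.
Qed.

Lemma lower t : s < t <= b -> exp (c' * (t - s)) <= hh t + SS t.
Proof.
  intros Ht. assert (Phi c' t >= 1).
  { destruct (Phi_mvt c' t Ht) as [E|(ξ & Hξ & E)]. lra.
    assert (PP ξ) by (apply all_P; lra). destruct H0 as [Hh HF]. unfold FF in HF.
    assert (Hxab : a <= ξ <= b) by lra.
    pose proof (WSS_sq ξ Hxab). pose proof (WSS_pos ξ).
    assert (0 < SS ξ). { destruct (Req_dec (SS ξ) 0) as [E'|E']. rewrite E' in H0. nra. lra. }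
    assert (0 <= exp (- (c' * (ξ - s))) * (hh ξ + SS ξ) * (h1 ξ - c' * SS ξ) / SS ξ * (t - s)).
    { apply Rmult_le_pos; [|lra]. unfold Rdiv. apply Rmult_le_pos; [|left; apply Rinv_0_lt_compat; lra].
      apply Rmult_le_pos; [|lra]. apply Rmult_le_pos; [left; apply exp_pos|lra]. }
    lra. }
  unfold Phi in H0. 
  assert (exp (- (c' * (t - s))) * exp (c' * (t - s)) = 1) by (rewrite <- exp_plus; replace (- (c' * (t - s)) + c' * (t - s)) with 0 by ring; apply exp_0).
  pose proof (exp_pos (c' * (t - s))). pose proof (exp_pos (- (c' * (t - s)))).
  nra.
Qed.

Lemma upper t : s < t <= b -> hh t + SS t <= exp (t - s).
Proof.
  intros Ht. assert (Phi 1 t <= 1).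
  { destruct (Phi_mvt 1 t Ht) as [E|(ξ & Hξ & E)]. lra.
    assert (PP ξ) by (apply all_P; lra). destruct H0 as [Hh HF].
    assert (Hxab : a <= ξ <= b) by lra.
    pose proof (WSS_sq ξ Hxab). pose proof (WSS_pos ξ). pose proof (Wh1_sq ξ Hxab).
    assert (0 < SS ξ). { destruct (Req_dec (SS ξ) 0) as [E'|E']. rewrite E' in H0. nra. lra. }
    assert (h1 ξ <= SS ξ) by (destruct (Rle_lt_dec (h1 ξ) (SS ξ)); auto; nra).
    assert (0 <= exp (- (1 * (ξ - s))) * (hh ξ + SS ξ) * (SS ξ - 1 * h1 ξ) / SS ξ * (t - s)).
    { apply Rmult_le_pos; [|lra]. unfold Rdiv. apply Rmult_le_pos; [|left; apply Rinv_0_lt_compat; lra].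
      apply Rmult_le_pos; [|lra]. apply Rmult_le_pos; [left; apply exp_pos|lra]. }
    replace (exp (- (1 * (ξ - s))) * (hh ξ + SS ξ) * (h1 ξ - 1 * SS ξ) / SS ξ * (t - s)) with
      (- (exp (- (1 * (ξ - s))) * (hh ξ + SS ξ) * (SS ξ - 1 * h1 ξ) / SS ξ * (t - s))) in E by (field; lra).
    lra. }
  unfold Phi in H0. 
  assert (exp (- (1 * (t - s))) * exp (t - s) = 1) by (rewrite <- exp_plus; replace (- (1 * (t - s)) + (t - s)) with 0 by ring; apply exp_0).
  pose proof (exp_pos (t - s)). pose proof (exp_pos (- (1 * (t - s)))).
  pose proof (WSS_pos t). assert (1 <= hh t) by (apply Whh_ge1; lra).
  nra.
Qed.
End S.

End PG.
Import PG.

Module PH.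

Lemma QG n K a b g g1 g2 : CH n K a b g g1 g2 -> forall s t, a <= s < t -> t <= b ->
  sqrt (1 - K*K) * (t - s) <= hdist n (g s) (g t) <= t - s.
Proof.
  intros HC s t Hs Ht.
  pose proof HC as (HK & Hab & _).
  assert (Hd : hdist n (g s) (g t) = ln (PF.hh n g s t + PF.SS n g s t)).
  { unfold hdist, acosh, PF.hh, PF.SS. rewrite mink_sym. auto. }
  pose proof (hh_ge1 n K a b g g1 g2 HC s ltac:(lra) t ltac:(lra)).
  pose proof (SS_pos n g s t).
  pose proof (cpos n K a b g g1 g2 HC) as Hc. pose proof (csq n K a b g g1 g2 HC) as Hcs.
  set (c := sqrt (1 - K*K)) in *.
  assert (c <= 1).
  { destruct (Rle_lt_dec c 1); auto. nra. }
  split.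
  - destruct (Rle_lt_dec (c * (t - s)) (hdist n (g s) (g t))) as [|Hlt]; auto. exfalso.
    set (D := hdist n (g s) (g t)) in *.
    assert (0 <= D). { rewrite Hd. rewrite <- ln_1. apply ln_le; lra. }
    set (c' := (D / (t - s) + c) / 2).
    assert (HDt : D / (t - s) < c).
    { apply Rmult_lt_reg_r with (t - s). lra. unfold Rdiv; rewrite Rmult_assoc, Rinv_l; lra. }
    assert (0 <= D / (t - s)) by (apply Rdiv_le_0_compat; lra).
    assert (0 < c') by (unfold c'; lra).
    assert (c' < c) by (unfold c'; lra).
    assert (c' * c' < 1 - K * K) by nra.
    pose proof (lower n K a b g g1 g2 HC s ltac:(lra) c' H4 H6 t ltac:(lra)).
    assert (c' * (t - s) <= D).
    { rewrite Hd. rewrite <- (ln_exp (c' * (t - s))). apply ln_le. apply exp_pos. auto. }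
    assert (D < c' * (t - s)).
    { unfold c'. replace ((D / (t - s) + c) / 2 * (t - s)) with ((D + c * (t - s))/2) by (field; lra). lra. }
    lra.
  - rewrite Hd. rewrite <- (ln_exp (t - s)). apply ln_le. lra.
    assert (c/2*(c/2) < 1-K*K) by nra.
    apply (upper n K a b g g1 g2 HC s ltac:(lra) (c / 2)).
    { apply Rdiv_lt_0_compat; lra. }
    { auto. }
    lra.
Qed.

End PH.
Import PH.

Module PI0.

Lemma cosh_sinh x : cosh x * cosh x - sinh x * sinh x = 1.
Proof.
  unfold cosh, sinh. rewrite exp_Ropp. pose proof (exp_pos x). field. lra.
Qed.

Lemma sinh_diff d s : sinh (d - s) = sinh d * cosh s - cosh d * sinh s.
Proof.
  unfold cosh, sinh. unfold Rminus. rewrite exp_plus, !exp_Ropp, exp_plus, exp_Ropp.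
  pose proof (exp_pos d). pose proof (exp_pos s). field. lra.
Qed.

Lemma sinh_nonneg x : 0 <= x -> 0 <= sinh x.
Proof.
  intros. unfold sinh. assert (exp (-x) <= exp x).
  { destruct (Req_dec x 0). subst. rewrite Ropp_0; lra. left; apply exp_increasing; lra. }
  lra.
Qed.

Lemma acosh_exp z : 1 <= z -> exp (acosh z) = z + sqrt (z*z - 1).
Proof.
  intros. unfold acosh. apply exp_ln. pose proof (sqrt_pos (z*z-1)). lra.
Qed.

Lemma inv_w z : 1 <= z -> / (z + sqrt (z*z-1)) = z - sqrt (z*z-1).
Proof.
  intros. pose proof (sqrt_sqrt (z*z-1) ltac:(nra)). pose proof (sqrt_pos (z*z-1)).
  assert ((z + sqrt (z*z-1)) * (z - sqrt (z*z-1)) = 1) by nra.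
  assert (Hw : z + sqrt (z*z-1) <> 0) by lra.
  apply Rmult_eq_reg_l with (z + sqrt (z*z-1)); auto. rewrite Rinv_r; auto.
Qed.

Lemma cosh_acosh z : 1 <= z -> cosh (acosh z) = z.
Proof.
  intros. unfold cosh. rewrite exp_Ropp, acosh_exp, inv_w by auto. field.
Qed.

Lemma sinh_acosh z : 1 <= z -> sinh (acosh z) = sqrt (z*z - 1).
Proof.
  intros. unfold sinh. rewrite exp_Ropp, acosh_exp, inv_w by auto. field.
Qed.

Lemma acosh_1 : acosh 1 = 0.
Proof. unfold acosh. replace (1*1-1) with 0 by ring. rewrite sqrt_0, Rplus_0_r. apply ln_1. Qed.

Lemma ln_nonpos x : x <= 0 -> ln x = 0.
Proof. intros. unfold ln. destruct (Rlt_dec 0 x) as [Q|Q]. exfalso; lra. reflexivity. Qed.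

Lemma acosh_mono z M : 1 <= M -> z <= M -> acosh z <= acosh M.
Proof.
  intros HM Hz. unfold acosh.
  assert (0 <= ln (M + sqrt (M*M - 1))).
  { rewrite <- ln_1. apply ln_le. lra. pose proof (sqrt_pos (M*M-1)). lra. }
  destruct (Rle_lt_dec (z + sqrt (z*z-1)) 0) as [L|L].
  - rewrite (ln_nonpos _ L). auto.
  - apply ln_le; auto. assert (sqrt (z*z-1) <= sqrt (M*M-1)).
    { destruct (Rle_lt_dec (z*z-1) 0). rewrite (sqrt_neg_0 (z*z-1)) by lra. apply sqrt_pos.
      apply sqrt_le_1_alt. assert (0 < z). { pose proof (sqrt_pos (z*z-1)). destruct (Rle_lt_dec z 0); auto. 
        exfalso. assert (sqrt (z*z-1) < - z).
        { rewrite <- (sqrt_square (-z)) by lra. apply sqrt_lt_1_alt. nra. } lra. }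
      nra. }
    lra.
Qed.

Lemma cosh_cont x : continuity_pt cosh x.
Proof. eapply der_cont. apply is_derive_Reals, derivable_pt_lim_cosh. Qed.
Lemma sinh_cont x : continuity_pt sinh x.
Proof. eapply der_cont. apply is_derive_Reals, derivable_pt_lim_sinh. Qed.

End PI0.
Import PI0.

Module PI.

Lemma mink_r2 n p al u be v : mink n p (fun i => al * u i + be * v i) = al * mink n p u + be * mink n p v.
Proof. rewrite mink_addr, !mink_scalr. auto. Qed.
Lemma mink_l2 n p al u be v : mink n (fun i => al * u i + be * v i) p = al * mink n u p + be * mink n v p.
Proof. rewrite mink_add, !mink_scal. auto. Qed.

Lemma hyp_identity A B ch sh : ch * ch - sh * sh = 1 ->
  (A * ch - B * sh) * (A * ch - B * sh) - (- A * sh + B * ch) * (- A * sh + B * ch) = A * A - B * B.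
Proof. intros. replace (A * A - B * B) with ((A * A - B * B) * (ch * ch - sh * sh)) by (rewrite H; ring). ring. Qed.

Section S.
Variables (n : nat) (K a b : R) (g g1 g2 : R -> point).
Hypothesis H : CH n K a b g g1 g2.

Let HK : 0 <= K < 1. Proof. destruct H; auto. Qed.
Let Hab : a < b. Proof. destruct H as (_&?&_); auto. Qed.
Let x := g a.
Let y := g b.
Let c := sqrt (1 - K*K).
Let KC := K / c.
Let Hc : 0 < c. Proof. apply (cpos n K a b g g1 g2 H). Qed.
Let Hcc : c * c = 1 - K*K. Proof. apply (csq n K a b g g1 g2 H). Qed.
Let HKC : 0 <= KC. Proof. unfold KC; apply Rdiv_le_0_compat; lra. Qed.
Let Hxx : mink n x x = -1. Proof. apply (F0 n K a b g g1 g2 H); lra. Qed.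
Let Hyy : mink n y y = -1. Proof. apply (F0 n K a b g g1 g2 H); lra. Qed.
Let X := - mink n x y.
Let HX1 : 1 <= X. Proof. destruct H as (_&_&Hg&_). apply inH_ge1; apply Hg; lra. Qed.
Let D := hdist n x y.
Let HDX : D = acosh X. Proof. reflexivity. Qed.
Let HD : c * (b - a) <= D. Proof. apply (QG n K a b g g1 g2 H a b); lra. Qed.
Let HD0 : 0 < D. Proof. pose proof (Rmult_lt_0_compat c (b-a) Hc ltac:(lra)). lra. Qed.
Let HX : 1 < X.
Proof. destruct (Req_dec X 1) as [E|E]. rewrite HDX, E, acosh_1 in HD0. lra. lra. Qed.
Let Y := sqrt (X*X - 1).
Let HY : 0 < Y. Proof. apply sqrt_lt_R0. nra. Qed.
Let HYY : Y * Y = X * X - 1. Proof. apply sqrt_sqrt. nra. Qed.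
Let HcD : cosh D = X. Proof. rewrite HDX. apply cosh_acosh; lra. Qed.
Let HsD : sinh D = Y. Proof. rewrite HDX. apply sinh_acosh; lra. Qed.
Let e : point := fun i => /Y * y i + (-X/Y) * x i.

Let geod_eq σ : forall i, geod_pt n x y σ i = cosh σ * x i + sinh σ * e i.
Proof.
  intros i. unfold geod_pt. fold D. rewrite HcD, HsD. unfold e. field. lra.
Qed.
Let y_eq : forall i, y i = X * x i + Y * e i.
Proof. intros i. unfold e. field. lra. Qed.

Let y_lin w : mink n y w = X * mink n x w + Y * mink n e w.
Proof. rewrite (mink_ext n y (fun i => X * x i + Y * e i) w w); auto. apply mink_l2. Qed.
Let e_lin w : mink n e w = /Y * mink n y w + (-X/Y) * mink n x w.
Proof. unfold e. apply mink_l2. Qed.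
Let Hxy : mink n x y = - X. Proof. unfold X; ring. Qed.
Let Hxe : mink n x e = 0.
Proof. rewrite mink_sym, e_lin, (mink_sym n y x), Hxy, Hxx. field. lra. Qed.
Let Hye : mink n y e = Y.
Proof. rewrite mink_sym, e_lin, Hyy, Hxy. 
  transitivity ((X*X-1)/Y). field; lra. rewrite <- HYY. field; lra. Qed.
Let Hee : mink n e e = 1.
Proof. rewrite e_lin, Hye, Hxe. field. lra. Qed.

Definition Aq t := - mink n (g t) x.
Definition Bq t := mink n (g t) e.

Lemma Ubound t : a <= t <= b -> Aq t * Aq t - Bq t * Bq t - 1 <= KC * KC.
Proof.
  intros Ht. set (p := g t). set (A := Aq t). set (B := Bq t). set (u := A * A - B * B - 1).
  set (q := fun i : nat => p i + (-A) * x i + (-B) * e i).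
  assert (Hqx : mink n q x = 0).
  { unfold q. rewrite !mink_add, !mink_scal, (mink_sym n e x), Hxe, Hxx. unfold A, Aq. fold p. ring. }
  assert (Hqe : mink n q e = 0).
  { unfold q. rewrite !mink_add, !mink_scal, Hxe, Hee. unfold B, Bq. fold p. ring. }
  assert (Hqp : mink n q p = u).
  { unfold q. rewrite !mink_add, !mink_scal, (mink_sym n x p), (mink_sym n e p).
    assert (Hpp : mink n p p = -1) by (apply (F0 n K a b g g1 g2 H t Ht)). rewrite Hpp. unfold u, A, B, Aq, Bq. fold p. ring. }
  assert (Hqq : mink n q q = u).
  { rewrite <- Hqp. unfold q at 2. rewrite !mink_addr, !mink_scalr, Hqx, Hqe. ring. }
  destruct (Rle_lt_dec u (KC * KC)) as [|Hlt]; auto. exfalso.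
  assert (Hu0 : 0 < u) by nra.
  set (z := fun i : nat => / sqrt u * q i).
  pose proof (sqrt_lt_R0 u Hu0). pose proof (sqrt_sqrt u ltac:(lra)).
  assert (Hzz : mink n z z = 1).
  { unfold z. rewrite mink_scal, mink_scalr, Hqq. transitivity (u / (sqrt u * sqrt u)). field; lra. rewrite H1; field; lra. }
  assert (Hxz : mink n x z = 0). { unfold z. rewrite mink_scalr, mink_sym, Hqx. ring. }
  assert (Hyz : mink n y z = 0). { rewrite y_lin, Hxz. unfold z. rewrite mink_scalr, (mink_sym n e q), Hqe. ring. }
  assert (Ha1 : mink n (g a) z <= K / sqrt (1 - K*K)). { change (mink n x z <= KC). rewrite Hxz. lra. }
  assert (Hb1 : mink n (g b) z <= K / sqrt (1 - K*K)). { change (mink n y z <= KC). rewrite Hyz. lra. }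
  pose proof (M1 n K a b g g1 g2 H z Hzz Ha1 Hb1 t Ht) as H2.
  change (mink n p z <= KC) in H2.
  assert (mink n p z = sqrt u).
  { unfold z. rewrite mink_scalr, mink_sym, Hqp. transitivity ((sqrt u * sqrt u) / sqrt u). rewrite H1; field; lra. field; lra. }
  rewrite H3 in H2.
  assert (sqrt u * sqrt u <= KC * KC) by (apply Rmult_le_compat; lra). lra.
Qed.

Lemma Bneg t : a <= t <= b -> - Bq t <= KC.
Proof.
  intros Ht. set (z := fun i : nat => -1 * e i).
  assert (Hzz : mink n z z = 1) by (unfold z; rewrite mink_scal, mink_scalr, Hee; ring).
  assert (Ha1 : mink n (g a) z <= K / sqrt (1 - K*K)).
  { change (mink n x z <= KC). unfold z. rewrite mink_scalr, Hxe. lra. }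
  assert (Hb1 : mink n (g b) z <= K / sqrt (1 - K*K)).
  { change (mink n y z <= KC). unfold z. rewrite mink_scalr, Hye. lra. }
  pose proof (M1 n K a b g g1 g2 H z Hzz Ha1 Hb1 t Ht) as H2.
  change (mink n (g t) z <= KC) in H2. unfold z in H2. rewrite mink_scalr in H2. unfold Bq. lra.
Qed.

Lemma BDpos t : a <= t <= b -> X * Bq t - Y * Aq t <= KC.
Proof.
  intros Ht. set (z := fun i : nat => Y * x i + X * e i).
  assert (Hzz : mink n z z = 1).
  { unfold z. rewrite mink_l2, !mink_r2, Hxx, Hee, Hxe, (mink_sym n e x), Hxe. nra. }
  assert (Ha1 : mink n (g a) z <= K / sqrt (1 - K*K)).
  { change (mink n x z <= KC). unfold z. rewrite mink_r2, Hxx, Hxe. nra. }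
  assert (Hb1 : mink n (g b) z <= K / sqrt (1 - K*K)).
  { change (mink n y z <= KC). unfold z. rewrite mink_r2, Hye, (mink_sym n y x), Hxy. nra. }
  pose proof (M1 n K a b g g1 g2 H z Hzz Ha1 Hb1 t Ht) as H2.
  change (mink n (g t) z <= KC) in H2. unfold z in H2. rewrite mink_r2 in H2. unfold Bq, Aq. lra.
Qed.

Lemma AL t σ : - mink n (g t) (geod_pt n x y σ) = Aq t * cosh σ - Bq t * sinh σ.
Proof.
  rewrite (mink_ext n (g t) (g t) (geod_pt n x y σ) (fun i => cosh σ * x i + sinh σ * e i)); auto.
  rewrite mink_r2. unfold Aq, Bq. ring.
Qed.

Lemma u_eq t : a <= t <= b -> forall σ,
  (Aq t * cosh σ - Bq t * sinh σ) * (Aq t * cosh σ - Bq t * sinh σ) -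
  (- Aq t * sinh σ + Bq t * cosh σ) * (- Aq t * sinh σ + Bq t * cosh σ) = Aq t * Aq t - Bq t * Bq t.
Proof. intros. apply hyp_identity. apply cosh_sinh. Qed.

Lemma dir1 t : a <= t <= b -> exists σ, 0 <= σ <= D /\
  (- mink n (g t) (geod_pt n x y σ)) * (- mink n (g t) (geod_pt n x y σ)) <= 1 + 2 * (KC * KC).
Proof.
  intros Ht. pose proof (Ubound t Ht). pose proof (Bneg t Ht). pose proof (BDpos t Ht).
  set (A := Aq t) in *. set (B := Bq t) in *.
  destruct (Rle_lt_dec B 0) as [HB|HB].
  - exists 0. split. lra. rewrite AL. fold A B. rewrite cosh_0, sinh_0.
    assert (B * B <= KC * KC) by nra. nra.
  - destruct (Rle_lt_dec 0 (X * B - Y * A)) as [HBD|HBD].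
    + exists D. split. lra. rewrite AL. fold A B. rewrite HcD, HsD.
      pose proof (hyp_identity A B X Y ltac:(nra)).
      assert ((X * B - Y * A) * (X * B - Y * A) <= KC * KC) by nra.
      replace (- A * Y + B * X) with (X * B - Y * A) in H3 by ring. nra.
    + destruct (IVT_ab (fun σ => A * sinh σ - B * cosh σ) 0 D) as (σ & Hσ & Hσ0).
      * lra.
      * intros. apply (continuity_pt_minus (fun σ => A * sinh σ) (fun σ => B * cosh σ)).
        apply (continuity_pt_scal sinh). apply sinh_cont. apply (continuity_pt_scal cosh). apply cosh_cont.
      * rewrite sinh_0, cosh_0. lra.
      * rewrite HcD, HsD. lra.
      * exists σ. split. auto. rewrite AL. fold A B.
        pose proof (u_eq t Ht σ). fold A B in H3.
        assert (- A * sinh σ + B * cosh σ = 0) by lra. rewrite H4 in H3. nra.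
Qed.

Lemma dir2 σ : 0 <= σ <= D -> exists t, a <= t <= b /\
  (- mink n (g t) (geod_pt n x y σ)) * (- mink n (g t) (geod_pt n x y σ)) <= 1 + KC * KC.
Proof.
  intros Hσ. set (eσ := fun i : nat => sinh σ * x i + cosh σ * e i).
  destruct (IVT_ab (fun t => mink n (g t) eσ) a b) as (t & Ht & Ht0).
  - lra.
  - intros t Ht. eapply der_cont. apply (v_der n K a b g g1 g2 H); auto.
  - change (mink n x eσ <= 0). unfold eσ. rewrite mink_r2, Hxx, Hxe. pose proof (sinh_nonneg σ ltac:(lra)). lra.
  - change (0 <= mink n y eσ). unfold eσ. rewrite mink_r2, Hye, (mink_sym n y x), Hxy.
    pose proof (sinh_nonneg (D - σ) ltac:(lra)). rewrite sinh_diff, HcD, HsD in H0. lra.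
  - exists t. split; auto. rewrite AL. pose proof (u_eq t Ht σ). pose proof (Ubound t Ht).
    assert (- Aq t * sinh σ + Bq t * cosh σ = 0).
    { rewrite <- Ht0. unfold eσ. rewrite mink_r2. unfold Aq, Bq. ring. }
    rewrite H2 in H0. nra.
Qed.
End S.

End PI.
Import PI.


Definition rK K := 1 + 2 * (K*K/(1-K*K)).
Definition fK K := acosh (sqrt (rK K)).

Lemma rK_ge1 K : 0 <= K < 1 -> 1 <= rK K.
Proof. intros. unfold rK. assert (0 <= K*K/(1-K*K)) by (apply Rdiv_le_0_compat; nra). lra. Qed.

Lemma sqrt_ge1 z : 1 <= z -> 1 <= sqrt z.
Proof. intros. rewrite <- sqrt_1. apply sqrt_le_1_alt. auto. Qed.

Lemma fK_cont x : 0 <= x < 1 -> continuity_pt fK x.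
Proof.
  intros Hx. unfold fK, acosh.
  assert (Hr : continuity_pt rK x).
  { eapply der_cont. unfold rK. auto_derive. nra. reflexivity. }
  assert (Hs : continuity_pt (fun K => sqrt (rK K)) x).
  { apply (continuity_pt_comp rK sqrt); auto. apply continuity_pt_sqrt. pose proof (rK_ge1 x Hx). lra. }
  pose proof (sqrt_ge1 _ (rK_ge1 x Hx)) as H1.
  apply (continuity_pt_comp (fun K => sqrt (rK K) + sqrt (sqrt (rK K) * sqrt (rK K) - 1)) ln).
  - apply (continuity_pt_plus (fun K => sqrt (rK K)) (fun K => sqrt (sqrt (rK K) * sqrt (rK K) - 1))); auto.
    apply (continuity_pt_comp (fun K => sqrt (rK K) * sqrt (rK K) - 1) sqrt).
    + apply (continuity_pt_minus (fun K => sqrt (rK K) * sqrt (rK K)) (fun _ => 1)).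
      apply (continuity_pt_mult (fun K => sqrt (rK K)) (fun K => sqrt (rK K))); auto.
      apply continuity_pt_const; intros ? ?; auto.
    + apply continuity_pt_sqrt. nra.
  - eapply der_cont. apply is_derive_Reals. apply derivable_pt_lim_ln.
    pose proof (sqrt_pos (sqrt (rK x) * sqrt (rK x) - 1)). lra.
Qed.

Lemma acosh_ge0 z : 1 <= z -> 0 <= acosh z.
Proof. intros. unfold acosh. rewrite <- ln_1. apply ln_le. lra. pose proof (sqrt_pos (z*z-1)). lra. Qed.

Lemma bound_to_dist z K : 0 <= K < 1 -> z * z <= rK K -> acosh z <= fK K.
Proof.
  intros HK Hz. unfold fK. apply acosh_mono. apply sqrt_ge1, rK_ge1; auto.
  destruct (Rle_lt_dec z 0). pose proof (sqrt_pos (rK K)). lra.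
  rewrite <- (sqrt_square z) by lra. apply sqrt_le_1_alt. auto.
Qed.

Lemma KC_sq K : 0 <= K < 1 -> K / sqrt (1 - K*K) * (K / sqrt (1 - K*K)) = K*K/(1-K*K).
Proof.
  intros. pose proof (sqrt_sqrt (1-K*K) ltac:(nra)). pose proof (sqrt_lt_R0 (1-K*K) ltac:(nra)).
  transitivity (K*K/(sqrt (1-K*K) * sqrt (1-K*K))). field. lra. rewrite H0. auto.
Qed.

Theorem mainTheorem12 :
  exists f : R -> R,
    (forall x, 0 <= x < 1 -> forall eps, 0 < eps -> exists delta, 0 < delta /\
       forall y, 0 <= y < 1 -> Rabs (y - x) < delta -> Rabs (f y - f x) < eps) /\
    (forall x, 0 <= x < 1 -> 0 <= f x) /\
    f 0 = 0 /\
    forall (n : nat) (K a b : R) (gamma gamma1 gamma2 : R -> point),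
      0 <= K < 1 ->
      a < b ->
      (forall t, a <= t <= b -> inH n (gamma t)) ->
      (forall t i, a <= t <= b -> (i <= n)%nat ->
         is_derive (fun s => gamma s i) t (gamma1 t i)) ->
      (forall t i, a <= t <= b -> (i <= n)%nat ->
         is_derive (fun s => gamma1 s i) t (gamma2 t i)) ->
      (forall t, a <= t <= b -> mink n (gamma1 t) (gamma1 t) = 1) ->
      (forall t, a <= t <= b -> geod_curvature n gamma gamma2 t <= K) ->
      quasi_geodesic n (/ sqrt (1 - K ^ 2)) gamma a b /\
      hausdorff_dist_le n (path_image gamma a b)
        (geodesic_segment_image n (gamma a) (gamma b)) (f K).
Proof.
  exists fK. split; [|split; [|split]].
  - intros x Hx eps He. destruct (fK_cont x Hx eps He) as (alp & Ha & Hal).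
    exists alp. split; auto. intros y Hy Hyx.
    destruct (Req_dec y x) as [->|E]. rewrite Rminus_eq_0, Rabs_R0; auto.
    apply (Hal y). split. split; auto. unfold no_cond; auto. auto.
  - intros x Hx. unfold fK. apply acosh_ge0, sqrt_ge1, rK_ge1; auto.
  - unfold fK, rK. replace (1 + 2 * (0 * 0 / (1 - 0 * 0))) with 1 by field. rewrite sqrt_1. apply acosh_1.
  - intros n K a b g g1 g2 HK Hab Hg Hd1 Hd2 Hu Hc.
    assert (HC : CH n K a b g g1 g2). { exact (conj HK (conj Hab (conj Hg (conj Hd1 (conj Hd2 (conj Hu Hc)))))). }
    replace (K ^ 2) with (K * K) by ring.
    pose proof (cpos n K a b g g1 g2 HC) as Hcp. pose proof (csq n K a b g g1 g2 HC) as Hcs.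
    assert (Hc1 : sqrt (1 - K*K) <= 1) by (destruct (Rle_lt_dec (sqrt (1-K*K)) 1); auto; nra).
    split.
    + intros s t Hs Ht. rewrite Rinv_inv.
      assert (Hk : 1 <= / sqrt (1 - K*K)).
      { assert (/ sqrt (1 - K*K) * sqrt (1 - K*K) = 1) by (field; lra).
        pose proof (Rinv_0_lt_compat _ Hcp). nra. }
      destruct (Rtotal_order s t) as [Q|[Q|Q]].
      * pose proof (QG n K a b g g1 g2 HC s t ltac:(lra) ltac:(lra)).
        rewrite Rabs_left by lra. replace (- (s - t)) with (t - s) by ring.
        split. lra. assert (0 <= t - s) by lra. nra.
      * subst. rewrite Rminus_eq_0, Rabs_R0, !Rmult_0_r. unfold hdist.
        rewrite (F0 n K a b g g1 g2 HC t Ht). replace (- -1) with 1 by ring. rewrite acosh_1. lra.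
      * pose proof (QG n K a b g g1 g2 HC t s ltac:(lra) ltac:(lra)).
        assert (Hsym : hdist n (g s) (g t) = hdist n (g t) (g s)) by (unfold hdist; rewrite mink_sym; auto).
        rewrite Hsym, Rabs_right by lra.
        split. lra. assert (0 <= s - t) by lra. nra.
    + split.
      * intros p (t & Ht & ->) eps He.
        destruct (dir1 n K a b g g1 g2 HC t Ht) as (σ & Hσ & Hb).
        exists (geod_pt n (g a) (g b) σ). split. exists σ; auto.
        assert (hdist n (g t) (geod_pt n (g a) (g b) σ) <= fK K).
        { unfold hdist. apply bound_to_dist; auto. unfold rK. rewrite <- KC_sq by auto. auto. }
        lra.
      * intros q (σ & Hσ & ->) eps He.
        destruct (dir2 n K a b g g1 g2 HC σ Hσ) as (t & Ht & Hb).
        exists (g t). split. exists t; auto.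
        assert (hdist n (geod_pt n (g a) (g b) σ) (g t) <= fK K).
        { unfold hdist. rewrite mink_sym. apply bound_to_dist; auto. unfold rK. rewrite <- KC_sq by auto.
          assert (0 <= K / sqrt (1 - K*K) * (K / sqrt (1 - K*K))) by nra. lra. }
        lra.
Qed.
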